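(* Let $\Delta\in\mathbb F^{m\times m}$ be a connection matrix with column/row partition $J_0,\dots,J_b$, and let $\Delta^0,\dots,\Delta^m$, $T^1,\dots,T^{m-1}$ be produced by the Incremental Sweeping Algorithm applied to $\Delta$. Then for $2\le r\le m$ and $k=1,\dots,b$, $$\Delta^r_{J_{k-1}J_k}=(T^{r-1}_{J_{k-1}J_{k-1}})^{-1}\,\Delta^{r-1}_{J_{k-1}J_k}\,T^{r-1}_{J_kJ_k},$$ and all entries of $\Delta^r$ outside $\bigcup_k J_{k-1}\times J_k$ are zero. Consequently, in passing from $\Delta^{r-1}$ to $\Delta^r$, the only columns modified (by adding multiples of other columns) are columns $j$ such that $(j-r+1,j)$ is a change-of-basis pivot of iteration $r-1$, and the only rows modified (by adding multiples of other rows) are rows $p$ such that $(j-r+1,p)$ is the primary pivot used for some change-of-basis pivot $(j-r+1,j)$ of iteration $r-1$.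
   Context: Throughout, $\mathbb F$ is a field and $m\ge1$. $A_{IJ}$ is the submatrix of $A$ with rows in $I$, columns in $J$. $U^{pq}$ is the $m\times m$ matrix whose only nonzero entry is a $1$ in position $(p,q)$. Superscripts on matrices are indices, not powers. A connection matrix (over $\mathbb F$) is a matrix $\Delta\in\mathbb F^{m\times m}$ together with a partition $\{1,\dots,m\}=J_0\sqcup\cdots\sqcup J_b$ (the column/row partition; the $J_k$ need not consist of consecutive integers) such that $\Delta$ is upper triangular, $\Delta\Delta=0$, and $\Delta_{ij}=0$ unless $i<j$ and $(i,j)\in\bigcup_{k=1}^bJ_{k-1}\times J_k$. For $1\le r\le m-1$ the $r$-th diagonal is $\{(j-r,j):r<j\le m\}$. Incremental Sweeping Algorithm (ISA) applied to a connection matrix $\Delta$: set $\Delta^0=\Delta^1=\Delta$. For $r=1,\dots,m-1$ in turn: (Markup) for every position $(j-r,j)$ on the $r$-th diagonal with $\Delta^r_{j-r,j}\ne0$ such that no position in column $j$ was marked as a primary pivot at an earlier iteration: if some position $(j-r,p)$ of row $j-r$ was marked as a primary pivot at an earlier iteration, mark $(j-r,j)$ as a change-of-basis pivot of iteration $r$; otherwise mark $(j-r,j)$ permanently as a primary pivot. (Update) Let $T^r=I-\sum \frac{\Delta^r_{j-r,j}}{\Delta^r_{j-r,p}}U^{pj}$, the sum running over all change-of-basis pivots $(j-r,j)$ of iteration $r$, where $(j-r,p)$ is the primary pivot position in row $j-r$ (the primary pivot used for $(j-r,j)$); set $\Delta^{r+1}=(T^r)^{-1}\Delta^rT^r$.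 *)

(* Defs.v *)
From HB Require Import structures.
From mathcomp Require Import all_boot all_order all_algebra.
Set Implicit Arguments. Unset Strict Implicit. Unset Printing Implicit Defensive.
Import Order.TTheory GRing.Theory.
Local Open Scope ring_scope.

(* Indices are 0-based: 'I_m = {0,...,m-1} stands for {1,...,m}.
   The partition J_0,...,J_b is encoded by part : 'I_m -> 'I_b.+1,
   J_k = [set i | part i == k]. *)

Section Defs.
Variables (F : fieldType) (m b : nat).

Definition block (part : 'I_m -> 'I_b.+1) (k : nat) : {set 'I_m} :=
  [set i | val (part i) == k].

Definition conn_adj (part : 'I_m -> 'I_b.+1) (i j : 'I_m) : bool :=
  (val (part i)).+1 == val (part j).

Definition is_partition (part : 'I_m -> 'I_b.+1) : Prop :=
  forall k : 'I_b.+1, exists i, part i = k.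

Definition is_connection_matrix (part : 'I_m -> 'I_b.+1) (D : 'M[F]_m) : Prop :=
  [/\ (forall i j : 'I_m, (j < i)%N -> D i j = 0),
      D *m D = 0 &
      (forall i j : 'I_m, D i j != 0 -> (i < j)%N && conn_adj part i j)].

(* Submatrix A_{IJ} (rows in I, columns in J, in increasing order). *)
Definition subm (A : 'M[F]_m) (I J : {set 'I_m}) : 'M[F]_(#|I|, #|J|) :=
  \matrix_(a, c) A (enum_val a) (enum_val c).

(* state at the start of iteration r: (Delta^r, set of primary pivots marked
   at iterations < r) *)
Definition isa_state := ('M[F]_m * {set 'I_m * 'I_m})%type.

Definition isa_cand (S : isa_state) (r : nat) (i j : 'I_m) : bool :=
  [&& (i + r == j)%N, S.1 i j != 0 & [forall x : 'I_m, (x, j) \notin S.2]].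

Definition isa_cob (S : isa_state) r i j : bool :=
  isa_cand S r i j && [exists p : 'I_m, (i, p) \in S.2].

Definition isa_newprim (S : isa_state) r i j : bool :=
  isa_cand S r i j && ~~ [exists p : 'I_m, (i, p) \in S.2].

Definition isa_pivot (S : isa_state) (i : 'I_m) : option 'I_m :=
  [pick p | (i, p) \in S.2].

Definition isa_T (S : isa_state) (r : nat) : 'M[F]_m :=
  1%:M - \sum_(i : 'I_m) \sum_(j : 'I_m | isa_cob S r i j)
           (if isa_pivot S i is Some p then (S.1 i j / S.1 i p) *: delta_mx p j
            else 0).

Definition isa_step (r : nat) (S : isa_state) : isa_state :=
  (invmx (isa_T S r) *m S.1 *m isa_T S r,
   S.2 :|: [set x | isa_newprim S r x.1 x.2]).

Variable D : 'M[F]_m.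

(* isa_st n = (Delta^n, primary pivots marked at iterations < n);
   Delta^0 = Delta^1 = D, Delta^{r+1} = step r (Delta^r) for r >= 1. *)
Fixpoint isa_st (n : nat) : isa_state :=
  match n with
  | 0 => (D, set0)
  | r.+1 => if r is 0 then (D, set0) else isa_step r (isa_st r)
  end.

Definition ISA_Delta (r : nat) : 'M[F]_m := (isa_st r).1.
Definition ISA_T (r : nat) : 'M[F]_m := isa_T (isa_st r) r.
Definition ISA_cob (r : nat) (i j : 'I_m) : bool := isa_cob (isa_st r) r i j.
Definition ISA_pivot (r : nat) (i : 'I_m) : option 'I_m := isa_pivot (isa_st r) i.

End Defs.

(* Main.v *)
Require Import Defs.
From HB Require Import structures.
From mathcomp Require Import all_boot all_order all_algebra.
From mathcomp Require Import zify.
Import GRing.Theory.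
Local Open Scope ring_scope.

Section Helpers.
Variable F : fieldType.

Lemma sum_nz (I : finType) (P : pred I) (f : I -> F) :
  \sum_(i | P i) f i != 0 -> exists i, P i && (f i != 0).
Proof.
move=> H; apply/existsP; apply: contraNT H => /existsPn Hn.
rewrite big1 // => i Pi; move: (Hn i); by rewrite Pi /= negbK => /eqP.
Qed.

Lemma mul_nz (x y : F) : x * y != 0 -> x != 0 /\ y != 0.
Proof. by rewrite mulf_eq0 negb_or => /andP[]. Qed.

Lemma inv_1subN n (N : 'M[F]_n) : N *m N = 0 ->
  (1%:M - N) \in unitmx /\ invmx (1%:M - N) = 1%:M + N.
Proof.
move=> H.
have E : (1%:M - N) *m (1%:M + N) = 1%:M.
  by rewrite mulmxDr mulmx1 mulmxBl mul1mx H subr0 subrK.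
have [U _] := mulmx1_unit E.
split => //.
have := congr1 (mulmx (invmx (1%:M - N))) E.
by rewrite mulmxA mulVmx // mul1mx mulmx1.
Qed.

Variable m : nat.

Lemma subm_mul (A B : 'M[F]_m) (I J K : {set 'I_m}) :
  (forall a x c, a \in I -> c \in J -> A a x * B x c != 0 -> x \in K) ->
  subm (A *m B) I J = subm A I K *m subm B K J.
Proof.
move=> H; apply/matrixP => a c; rewrite !mxE.
rewrite (bigID (mem K)) /= [X in _ + X]big1 ?addr0; last first.
  move=> x xK; apply/eqP; apply: contraNT xK => /H; apply; exact: enum_valP.
rewrite big_enum_val; apply: eq_bigr => t _; by rewrite !mxE.
Qed.

Lemma subm1 (I : {set 'I_m}) : subm (1%:M : 'M[F]_m) I I = 1%:M.
Proof.
apply/matrixP => a c; rewrite !mxE (inj_eq enum_val_inj) //.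
Qed.

Lemma submB1 (N : 'M[F]_m) I : subm (1%:M - N) I I = 1%:M - subm N I I.
Proof. by rewrite -subm1; apply/matrixP => a c; rewrite !mxE. Qed.

Lemma submD1 (N : 'M[F]_m) I : subm (1%:M + N) I I = 1%:M + subm N I I.
Proof. by rewrite -subm1; apply/matrixP => a c; rewrite !mxE. Qed.

Lemma one_add_nz (N : 'M[F]_m) a x : (1%:M + N) a x != 0 -> a = x \/ N a x != 0.
Proof. rewrite !mxE; case: (a =P x) => [->|_]; [by left | rewrite add0r; by right]. Qed.

Lemma one_sub_nz (N : 'M[F]_m) a x : (1%:M - N) a x != 0 -> a = x \/ N a x != 0.
Proof.
rewrite !mxE; case: (a =P x) => [->|_]; [by left | rewrite sub0r oppr_eq0; by right].
Qed.

End Helpers.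

Section Step.
Variables (F : fieldType) (m b : nat) (part : 'I_m -> 'I_b.+1).

Definition Nmat (S : isa_state F m) (r : nat) : 'M[F]_m :=
  \sum_(i : 'I_m) \sum_(j : 'I_m | isa_cob S r i j)
           (if isa_pivot S i is Some p then (S.1 i j / S.1 i p) *: delta_mx p j
            else 0).

Lemma TE S r : isa_T S r = 1%:M - Nmat S r.
Proof. by []. Qed.

Variables (S : isa_state F m) (r : nat).
Hypothesis HS1 : forall i j, S.1 i j != 0 -> conn_adj part i j.
Hypothesis HS2 : forall x y, (x, y) \in S.2 -> (x < y < x + r)%N.

Lemma pivotP i a : isa_pivot S i = Some a -> (i, a) \in S.2.
Proof. by rewrite /isa_pivot; case: pickP => // p Hp [<-]. Qed.

Lemma Nnz a c : Nmat S r a c != 0 -> exists i,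
  [/\ isa_cob S r i c, isa_pivot S i = Some a, S.1 i c != 0 & S.1 i a != 0].
Proof.
rewrite /Nmat summxE => /sum_nz [i /= Hi]; exists i.
move: Hi; rewrite summxE => /sum_nz [j /andP [Hc]].
case E: (isa_pivot S i) => [p|]; last by rewrite mxE eqxx.
rewrite !mxE => /mul_nz [Hq]; case: (a =P p) => [->|]; last by rewrite eqxx.
case: (c =P j) => [->|]; last by rewrite andbF eqxx.
move=> _; split => //; move: Hq; rewrite mulf_eq0 negb_or invr_eq0 => /andP[] //.
Qed.

Lemma N_diag a c : Nmat S r a c != 0 -> part a = part c.
Proof.
move=> /Nnz [i [_ _ /HS1 H1 /HS1 H2]]; apply: val_inj.
by move: H1 H2; rewrite /conn_adj => /eqP <- /eqP [].
Qed.

Lemma N_lt a c : Nmat S r a c != 0 -> (a < c)%N.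
Proof.
move=> /Nnz [i [Hc /pivotP /HS2 /andP [_ H] _ _]].
by move: Hc => /andP [/and3P [/eqP <- _ _] _].
Qed.

Lemma N_sq a x c : Nmat S r a x * Nmat S r x c = 0.
Proof.
apply/eqP; apply: contraT => /mul_nz [/Nnz [i [Hc _ _ _]] /Nnz [i' [_ /pivotP Hp _ _]]].
move: Hc => /andP [/and3P [_ _ /forallP /(_ i')]] .
by rewrite Hp.
Qed.


Lemma N_sq_mx : Nmat S r *m Nmat S r = 0.
Proof. by apply/matrixP => a c; rewrite !mxE big1 // => x _; rewrite N_sq. Qed.

Lemma subN_sq (I : {set 'I_m}) : subm (Nmat S r) I I *m subm (Nmat S r) I I = 0.
Proof. by apply/matrixP => a c; rewrite !mxE big1 // => x _; rewrite !mxE N_sq. Qed.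

Lemma T_inv : isa_T S r \in unitmx /\ invmx (isa_T S r) = 1%:M + Nmat S r.
Proof. rewrite TE; exact: inv_1subN N_sq_mx. Qed.

Lemma step1E : (isa_step r S).1 = (1%:M + Nmat S r) *m S.1 *m (1%:M - Nmat S r).
Proof. by rewrite /isa_step /= (proj2 T_inv). Qed.

Lemma part_add a x : (1%:M + Nmat S r) a x != 0 -> part a = part x.
Proof. by move/one_add_nz => [->|/N_diag]. Qed.

Lemma part_sub a x : (1%:M - Nmat S r) a x != 0 -> part a = part x.
Proof. by move/one_sub_nz => [->|/N_diag]. Qed.

Lemma step_supp i j : (isa_step r S).1 i j != 0 -> conn_adj part i j.
Proof.
rewrite /conn_adj step1E mxE => /sum_nz [y /= /mul_nz [+ /part_sub <-]].
by rewrite mxE => /sum_nz [x /= /mul_nz [/part_add -> /HS1]].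
Qed.

Lemma step_block (I J : {set 'I_m}) :
  (forall a x, part a = part x -> (a \in I) = (x \in I)) ->
  (forall a x, part a = part x -> (a \in J) = (x \in J)) ->
  subm (isa_T S r) I I \in unitmx /\
  subm (isa_step r S).1 I J =
    invmx (subm (isa_T S r) I I) *m subm S.1 I J *m subm (isa_T S r) J J.
Proof.
move=> HI HJ; rewrite !TE submB1.
have [U ->] := @inv_1subN _ _ _ (subN_sq I); split => //.
rewrite step1E (@subm_mul _ _ _ _ _ _ J); last first.
  by move=> a x c _ cJ /mul_nz [_ /part_sub /HJ ->].
rewrite (@subm_mul _ _ _ _ _ _ I); last first.
  by move=> a x c aI _ /mul_nz [/part_add /HI <-].
by rewrite submD1 submB1.
Qed.

End Step.

Lemma isa_inv (F : fieldType) (m b : nat) (part : 'I_m -> 'I_b.+1) (D : 'M[F]_m) :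
  (forall i j, D i j != 0 -> conn_adj part i j) ->
  forall n, (forall i j, (isa_st D n).1 i j != 0 -> conn_adj part i j) /\
            (forall x y, (x, y) \in (isa_st D n).2 -> (x < y < x + n)%N).
Proof.
move=> HD; elim=> [|n [IH1 IH2]]; first by split => // x y; rewrite inE.
case: n IH1 IH2 => [|n] IH1 IH2; first by split => // x y; rewrite inE.
change (isa_st D n.+2) with (isa_step n.+1 (isa_st D n.+1)); split.
  exact: step_supp.
move=> x y; rewrite /isa_step /= inE => /orP [/IH2|].
  by case/andP => -> /= H; rewrite addnS ltnS ltnW.
rewrite inE /= => /andP [/and3P [/eqP <- _ _] _].
lia.
Qed.

Theorem mainTheorem5 (F : fieldType) (m b : nat) (part : 'I_m -> 'I_b.+1)
    (D : 'M[F]_m) :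
  (0 < m)%N -> is_partition part -> is_connection_matrix part D ->
  forall r : nat, (2 <= r <= m)%N ->
  [/\ (forall k : nat, (1 <= k <= b)%N ->
         subm (ISA_T D r.-1) (block part k.-1) (block part k.-1) \in unitmx /\
         subm (ISA_Delta D r) (block part k.-1) (block part k) =
           invmx (subm (ISA_T D r.-1) (block part k.-1) (block part k.-1))
             *m subm (ISA_Delta D r.-1) (block part k.-1) (block part k)
             *m subm (ISA_T D r.-1) (block part k) (block part k)),
      (forall i j : 'I_m, ~~ conn_adj part i j -> ISA_Delta D r i j = 0) &
      exists N N' : 'M[F]_m,
        [/\ ISA_Delta D r = (1%:M + N') *m ISA_Delta D r.-1 *m (1%:M + N),
            (forall a c : 'I_m, N a c != 0 ->
               a != c /\ exists i : 'I_m, ISA_cob D r.-1 i c) &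
            (forall a c : 'I_m, N' a c != 0 ->
               a != c /\ exists i j : 'I_m,
                 ISA_cob D r.-1 i j /\ ISA_pivot D r.-1 i = Some a)]].
Proof.
move=> _ _ [_ _ HD] r /andP [r2 _].
case: r r2 => [|[|s]] // _.
have HD' : forall i j, D i j != 0 -> conn_adj part i j.
  by move=> i j /HD /andP [].
have [H1 H2] := @isa_inv _ _ _ part D HD' s.+1.
have E : ISA_Delta D s.+2 = (isa_step s.+1 (isa_st D s.+1)).1 by [].
rewrite /= E /ISA_T /ISA_Delta.
have Hb : forall k a x, part a = part x -> (a \in block part k) = (x \in block part k).
  by move=> k a x e; rewrite !inE e.
split.
- by move=> k _; apply: (@step_block _ _ _ part _ _ H1); apply: Hb.
- move=> i j Hc; apply/eqP; apply: contraNT Hc; exact: (@step_supp _ _ _ part _ _ H1).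
exists (- Nmat _ _ (isa_st D s.+1) s.+1), (Nmat _ _ (isa_st D s.+1) s.+1); split.
- by rewrite step1E.
- move=> a c; rewrite mxE oppr_eq0 => Hn.
  split; first by rewrite neq_ltn (@N_lt _ _ _ _ H2 _ _ Hn).
  by have [i [? _ _ _]] := @Nnz _ _ _ _ _ _ Hn; exists i.
- move=> a c Hn; split; first by rewrite neq_ltn (@N_lt _ _ _ _ H2 _ _ Hn).
  by have [i [? ? _ _]] := @Nnz _ _ _ _ _ _ Hn; exists i, c.
Qed.
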